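(* Let $X$ and $Y$ be discrete random variables with finite support. Let $\mathbf{p}$ be the distribution of $X$ and $\mathbf{q}$ the distribution of $Y$, each written as a vector sorted in nonincreasing order, with the shorter vector padded with zeros to the common length. If $H(Y\mid X)=0$, then $$H(X)\geq H(Y)+D(\mathbf{q}\,\|\,\mathbf{p}).$$ Equivalently, for every function $f$ one has $H(X)\geq H(f(X))+D(\mathbf{q}\|\mathbf{p})$, where $\mathbf{q}$ is the sorted distribution of $f(X)$.
   Context: $H$ denotes Shannon entropy in bits. $D(\mathbf{b}\|\mathbf{a})=\sum_i b_i\log_2(b_i/a_i)$ is the relative entropy, computed componentwise on the sorted and padded vectors, with the convention $0\log(0/a)=0$. *)

(* Defs.v *)
From Stdlib Require Import Reals List.
Import ListNotations.
Open Scope R_scope.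

Definition log2 (x : R) : R := ln x / ln 2.

Definition sumR (l : list R) : R := fold_right Rplus 0 l.

Definition plogp (x : R) : R := if Rle_dec x 0 then 0 else x * log2 x.

Definition entropy (l : list R) : R := - sumR (map plogp l).

(** A joint pmf of (X,Y): X takes values in {0..m-1}, Y in {0..n-1},
    P i j = Pr[X = i, Y = j]. *)
Definition is_joint_pmf (m n : nat) (P : nat -> nat -> R) : Prop :=
  (forall i j, (i < m)%nat -> (j < n)%nat -> 0 <= P i j) /\
  sumR (map (fun i => sumR (map (fun j => P i j) (seq 0 n))) (seq 0 m)) = 1.

Definition marg_X (m n : nat) (P : nat -> nat -> R) : list R :=
  map (fun i => sumR (map (fun j => P i j) (seq 0 n))) (seq 0 m).
Definition marg_Y (m n : nat) (P : nat -> nat -> R) : list R :=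
  map (fun j => sumR (map (fun i => P i j) (seq 0 m))) (seq 0 n).

Definition cond_entropy (m n : nat) (P : nat -> nat -> R) : R :=
  - sumR (map (fun i =>
        let px := sumR (map (fun j => P i j) (seq 0 n)) in
        sumR (map (fun j => if Rle_dec (P i j) 0 then 0
                            else P i j * log2 (P i j / px)) (seq 0 n)))
      (seq 0 m)).

Fixpoint insert_desc (x : R) (l : list R) : list R :=
  match l with
  | [] => [x]
  | y :: t => if Rle_dec y x then x :: y :: t else y :: insert_desc x t
  end.
Fixpoint sort_desc (l : list R) : list R :=
  match l with
  | [] => []
  | x :: t => insert_desc x (sort_desc t)
  end.

Definition pad (len : nat) (l : list R) : list R :=
  l ++ repeat 0 (len - length l).

Definition relent (b a : list R) : R :=
  sumR (map (fun ba => let '(bi, ai) := ba in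
                       if Rle_dec bi 0 then 0 else bi * log2 (bi / ai))
            (combine b a)).

Definition common_len (m n : nat) : nat := Nat.max m n.
Definition pvec (m n : nat) (P : nat -> nat -> R) : list R :=
  pad (common_len m n) (sort_desc (marg_X m n P)).
Definition qvec (m n : nat) (P : nat -> nat -> R) : list R :=
  pad (common_len m n) (sort_desc (marg_Y m n P)).

(* Main.v *)
Require Import Defs.
From Stdlib Require Import Reals List Permutation Sorting Lra Lia Classical.
Import ListNotations.
Open Scope R_scope.

Definition sumn (f : nat -> R) (n : nat) : R := sumR (map f (seq 0 n)).

Lemma sumR_app l1 l2 : sumR (l1 ++ l2) = sumR l1 + sumR l2.
Proof. induction l1; simpl; [lra|]. rewrite IHl1; lra. Qed.

Lemma sumn_0 f : sumn f 0 = 0.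
Proof. reflexivity. Qed.

Lemma sumn_S f n : sumn f (S n) = sumn f n + f n.
Proof. unfold sumn. rewrite seq_S, map_app, sumR_app. simpl. lra. Qed.

Lemma sumn_ext f g n : (forall k, (k < n)%nat -> f k = g k) -> sumn f n = sumn g n.
Proof. induction n; intros H; [reflexivity|]. rewrite !sumn_S, IHn by (intros; apply H; lia).
  rewrite H by lia. reflexivity. Qed.

Lemma sumn_le f g n : (forall k, (k < n)%nat -> f k <= g k) -> sumn f n <= sumn g n.
Proof. induction n; intros H; [rewrite !sumn_0; lra|]. rewrite !sumn_S.
  assert (sumn f n <= sumn g n) by (apply IHn; intros; apply H; lia).
  assert (f n <= g n) by (apply H; lia). lra. Qed.

Lemma sumn_plus f g n : sumn (fun k => f k + g k) n = sumn f n + sumn g n.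
Proof. induction n; [rewrite !sumn_0; lra|]. rewrite !sumn_S, IHn. lra. Qed.

Lemma sumn_scal c f n : sumn (fun k => c * f k) n = c * sumn f n.
Proof. induction n; [rewrite !sumn_0; lra|]. rewrite !sumn_S, IHn. lra. Qed.

Lemma sumn_opp f n : sumn (fun k => - f k) n = - sumn f n.
Proof. induction n; [rewrite !sumn_0; lra|]. rewrite !sumn_S, IHn. lra. Qed.

Lemma sumn_nonneg f n : (forall k, (k < n)%nat -> 0 <= f k) -> 0 <= sumn f n.
Proof. intros H. replace 0 with (sumn (fun _ => 0) n).
  - apply sumn_le. auto.
  - induction n; [reflexivity|]. rewrite sumn_S, IHn by (intros; apply H; lia). lra. Qed.

Lemma sumn_nonpos f n : (forall k, (k < n)%nat -> f k <= 0) -> sumn f n <= 0.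
Proof. intros H. rewrite <- (Ropp_involutive (sumn f n)), <- sumn_opp.
  assert (0 <= sumn (fun k => - f k) n) by (apply sumn_nonneg; intros k Hk; specialize (H k Hk); lra). lra. Qed.

Lemma sumn_mono f t t' : (t <= t')%nat -> (forall k, 0 <= f k) -> sumn f t <= sumn f t'.
Proof. intros H Hf. induction H as [|b0 H IH]; [lra|]. rewrite sumn_S. specialize (Hf b0). lra. Qed.

Lemma sumn_tail f a b : (forall k, (a <= k)%nat -> f k = 0) -> (a <= b)%nat -> sumn f b = sumn f a.
Proof. intros Hf H. induction H as [|b0 H IH]; [reflexivity|]. rewrite sumn_S, IH, Hf by lia. lra. Qed.

Lemma sumn_tail2 f a b : (forall k, (a <= k)%nat -> f k = 0) -> (forall k, (b <= k)%nat -> f k = 0) ->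
  sumn f a = sumn f b.
Proof. intros Ha Hb. rewrite <- (sumn_tail f a (Nat.max a b)), <- (sumn_tail f b (Nat.max a b)); auto; lia. Qed.

Lemma sumn_term f n k : (k < n)%nat -> (forall j, (j < n)%nat -> 0 <= f j) -> f k <= sumn f n.
Proof. intros Hk H. induction n; [lia|]. rewrite sumn_S.
  destruct (Nat.eq_dec k n) as [->|Hne].
  - assert (0 <= sumn f n) by (apply sumn_nonneg; intros; apply H; lia). lra.
  - assert (f k <= sumn f n) by (apply IHn; [lia| intros; apply H; lia]).
    assert (0 <= f n) by (apply H; lia). lra. Qed.

Lemma sumn_swap (g : nat -> nat -> R) m n :
  sumn (fun i => sumn (fun j => g i j) n) m = sumn (fun j => sumn (fun i => g i j) m) n.
Proof. induction m.
  - rewrite sumn_0. symmetry. replace 0 with (sumn (fun _ => 0) n).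
    + apply sumn_ext. intros; reflexivity.
    + clear. induction n; [reflexivity|]. rewrite sumn_S, IHn. lra.
  - rewrite sumn_S, IHm, <- sumn_plus. apply sumn_ext. intros. rewrite sumn_S. reflexivity. Qed.

Lemma sumR_idx {A : Type} (d : A) (g : A -> R) l : sumR (map g l) = sumn (fun k => g (nth k l d)) (length l).
Proof. induction l as [|x l IH]; [reflexivity|]. simpl length.
  unfold sumn. simpl. rewrite <- (seq_shift (length l) 0). rewrite map_map. simpl.
  f_equal. exact IH. Qed.

Lemma sumR_perm l l' : Permutation l l' -> sumR l = sumR l'.
Proof. induction 1; simpl; try lra. Qed.

Lemma sumn_const c t : sumn (fun _ => c) t = INR t * c.
Proof. induction t; [rewrite sumn_0; simpl; lra|]. rewrite sumn_S, IHt, S_INR. lra. Qed.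

Lemma sumn_minus f g n : sumn (fun k => f k - g k) n = sumn f n - sumn g n.
Proof. unfold Rminus. rewrite sumn_plus, sumn_opp. reflexivity. Qed.

Lemma sumn_le_tail f a t : (forall k, (a <= k)%nat -> f k = 0) -> (forall k, 0 <= f k) -> sumn f t <= sumn f a.
Proof. intros Hz Hn. destruct (Nat.le_ge_cases t a).
  - apply sumn_mono; auto.
  - rewrite (sumn_tail f a t); auto; lra. Qed.

Lemma sumn_zero_nonpos f n : (forall k, (k < n)%nat -> f k <= 0) -> sumn f n = 0 -> forall k, (k < n)%nat -> f k = 0.
Proof. intros H H0 k Hk. assert (- f k <= sumn (fun j => - f j) n).
  { apply (sumn_term (fun j => - f j)); auto. intros j Hj; specialize (H j Hj); lra. }
  rewrite sumn_opp in H1. specialize (H k Hk). lra. Qed.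

Lemma insert_perm x l : Permutation (insert_desc x l) (x :: l).
Proof. induction l as [|y t IH]; simpl; [auto|].
  destruct (Rle_dec y x); [auto|]. eapply perm_trans; [apply perm_skip, IH|]. apply perm_swap. Qed.

Lemma sort_perm l : Permutation (sort_desc l) l.
Proof. induction l; simpl; [auto|]. eapply perm_trans; [apply insert_perm|]. auto. Qed.

Lemma insert_sorted x l : StronglySorted Rge l -> StronglySorted Rge (insert_desc x l).
Proof. induction l as [|y t IH]; intros H; simpl.
  - constructor; constructor.
  - apply StronglySorted_inv in H as [H1 H2]. destruct (Rle_dec y x).
    + constructor; [constructor; auto|]. constructor; [lra|].
      eapply Forall_impl; [|exact H2]. intros; simpl in *; lra.
    + constructor; [auto|]. eapply Permutation_Forall; [apply Permutation_sym, insert_perm|].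
      constructor; [lra|auto]. Qed.

Lemma sort_sorted l : StronglySorted Rge (sort_desc l).
Proof. induction l; simpl; [constructor|]. apply insert_sorted; auto. Qed.

Lemma nth_nonneg L k : (forall x, In x L -> 0 <= x) -> 0 <= nth k L 0.
Proof. intros H. destruct (Nat.lt_ge_cases k (length L)).
  - apply H, nth_In; auto.
  - rewrite nth_overflow; [lra|auto]. Qed.

Lemma desc_nth L : StronglySorted Rge L -> (forall x, In x L -> 0 <= x) ->
  forall i j, (i <= j)%nat -> nth j L 0 <= nth i L 0.
Proof. induction L as [|x t IH]; intros HS Hp i j Hij.
  - destruct i, j; simpl; lra.
  - apply StronglySorted_inv in HS as [HS HF]. destruct i, j; simpl.
    + lra.
    + destruct (Nat.lt_ge_cases j (length t)).
      * rewrite Forall_forall in HF. assert (Hx := HF (nth j t 0) (nth_In _ _ H)). lra.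
      * rewrite nth_overflow by auto. apply Hp; left; auto.
    + lia.
    + apply IH; auto; [intros; apply Hp; right; auto| lia]. 
Qed.

Lemma nth_pad N l k : nth k (pad N l) 0 = nth k l 0.
Proof. unfold pad. destruct (Nat.lt_ge_cases k (length l)).
  - apply app_nth1; auto.
  - rewrite app_nth2 by auto. rewrite (nth_overflow l) by auto. apply nth_repeat.
Qed.

Lemma length_pad N l : (length l <= N)%nat -> length (pad N l) = N.
Proof. intros. unfold pad. rewrite length_app, repeat_length. lia. Qed.

Lemma length_sort l : length (sort_desc l) = length l.
Proof. apply Permutation_length, sort_perm. Qed.

Definition hinge (c x : R) : R := Rmax 0 (x - c).

Lemma hinge_nonneg c x : 0 <= hinge c x.
Proof. apply Rmax_l. Qed.

Lemma hinge_0 c : 0 <= c -> hinge c 0 = 0.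
Proof. intros. unfold hinge. apply Rmax_left. lra. Qed.

Lemma hinge_super c a b : 0 <= c -> 0 <= a -> 0 <= b -> hinge c a + hinge c b <= hinge c (a + b).
Proof. intros. unfold hinge. repeat (apply Rmax_case_strong; intros); lra. Qed.

Lemma hinge_ge c x : x <= c + hinge c x.
Proof. unfold hinge. apply Rmax_case_strong; intros; lra. Qed.

Lemma sumn_hinge c f n : 0 <= c -> (forall k, (k < n)%nat -> 0 <= f k) ->
  sumn (fun k => hinge c (f k)) n <= hinge c (sumn f n).
Proof. intros Hc. induction n; intros H.
  - rewrite !sumn_0, hinge_0 by lra. lra.
  - rewrite !sumn_S. assert (H1 := IHn (fun k Hk => H k ltac:(lia))).
    assert (Ha : 0 <= sumn f n) by (apply sumn_nonneg; intros; apply H; lia).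
    assert (Hb : 0 <= f n) by (apply H; lia).
    assert (H2 := hinge_super c _ _ Hc Ha Hb). lra. Qed.

Lemma abel_pos n : forall d b, (forall k k', (k <= k')%nat -> (k' < n)%nat -> b k' <= b k) ->
  (forall k, (k < n)%nat -> 0 <= b k) -> (forall t, (t <= n)%nat -> 0 <= sumn d t) ->
  0 <= sumn (fun k => d k * b k) n.
Proof. induction n; intros d b Hm Hp Hs.
  - rewrite sumn_0; lra.
  - rewrite sumn_S.
    assert (E : sumn (fun k => d k * b k) n = sumn (fun k => d k * (b k - b n)) n + b n * sumn d n).
    { rewrite <- sumn_scal, <- sumn_plus. apply sumn_ext. intros; ring. }
    rewrite E.
    assert (0 <= sumn (fun k => d k * (b k - b n)) n).
    { apply IHn; intros.
      - assert (b k' <= b k) by (apply Hm; lia). lra.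
      - assert (b n <= b k) by (apply Hm; lia). lra.
      - apply Hs; lia. }
    assert (0 <= sumn d (S n)) by (apply Hs; lia). rewrite sumn_S in H0.
    assert (0 <= b n) by (apply Hp; lia).
    assert (0 <= b n * (sumn d n + d n)) by (apply Rmult_le_pos; lra). nra. Qed.

Lemma abel n d a : (forall k k', (k <= k')%nat -> (k' < n)%nat -> a k' <= a k) ->
  (forall t, (t <= n)%nat -> 0 <= sumn d t) -> sumn d n = 0 ->
  0 <= sumn (fun k => d k * a k) n.
Proof. intros Hm Hs Ht. destruct n as [|n]; [rewrite sumn_0; lra|].
  assert (E : sumn (fun k => d k * a k) (S n) = sumn (fun k => d k * (a k - a n)) (S n) + a n * sumn d (S n)).
  { rewrite <- sumn_scal, <- sumn_plus. apply sumn_ext. intros; ring. }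
  rewrite E, Ht. rewrite Rmult_0_r, Rplus_0_r. apply abel_pos; auto; intros.
  - assert (a k' <= a k) by (apply Hm; lia). lra.
  - assert (a n <= a k) by (apply Hm; lia). lra. Qed.

Lemma ln2_pos : 0 < ln 2.
Proof. rewrite <- ln_1. apply ln_increasing; lra. Qed.

Lemma ln_le' x y : 0 < x -> x <= y -> ln x <= ln y.
Proof. intros Hx Hxy. destruct (Rle_lt_or_eq_dec _ _ Hxy) as [H|H].
  - left. apply ln_increasing; auto.
  - subst; lra. Qed.

Lemma log2_le x y : 0 < x -> x <= y -> log2 x <= log2 y.
Proof. intros. unfold log2. apply Rmult_le_compat_r.
  - left. apply Rinv_0_lt_compat, ln2_pos.
  - apply ln_le'; auto. Qed.

Lemma log2_div x y : 0 < x -> 0 < y -> log2 (x / y) = log2 x - log2 y.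
Proof. intros. unfold log2, Rdiv. rewrite ln_mult, ln_Rinv; try lra.
  - apply Rinv_0_lt_compat; auto. Qed.

Lemma log2_nonpos x : 0 < x -> x <= 1 -> log2 x <= 0.
Proof. intros. replace 0 with (log2 1) by (unfold log2; rewrite ln_1; lra). apply log2_le; auto. Qed.

Lemma log2_zero x : 0 < x -> log2 x = 0 -> x = 1.
Proof. intros H H0. unfold log2 in H0. assert (ln2_pos' := ln2_pos).
  assert (ln x = 0).
  { apply (Rmult_eq_compat_r (ln 2)) in H0. unfold Rdiv in H0.
    rewrite Rmult_assoc, Rinv_l, Rmult_1_r in H0; lra. }
  apply ln_inv; auto; [lra|]. rewrite ln_1; auto. Qed.

Fixpoint minpos (l : list R) : R :=
  match l with [] => 1 | x :: t => if Rle_dec x 0 then minpos t else Rmin x (minpos t) end.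

Lemma minpos_pos l : 0 < minpos l.
Proof. induction l; simpl; [lra|]. destruct (Rle_dec a 0); auto.
  apply Rmin_case; lra. Qed.

Lemma minpos_le l x : In x l -> 0 < x -> minpos l <= x.
Proof. induction l as [|y t IH]; simpl; [tauto|]. intros [->|H] Hx.
  - destruct (Rle_dec x 0); [lra|]. apply Rmin_l.
  - destruct (Rle_dec y 0); auto. eapply Rle_trans; [apply Rmin_r|]. auto. Qed.

Lemma determ m n P : (forall i j, (i < m)%nat -> (j < n)%nat -> 0 <= P i j) ->
  cond_entropy m n P = 0 ->
  forall i j, (i < m)%nat -> (j < n)%nat -> 0 < P i j -> P i j = sumn (fun j => P i j) n.
Proof. intros Hnn Hce.
  set (T := fun i j => if Rle_dec (P i j) 0 then 0 else P i j * log2 (P i j / sumn (fun j => P i j) n)).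
  change (- sumn (fun i => sumn (fun j => T i j) n) m = 0) in Hce.
  assert (HT : forall i j, (i < m)%nat -> (j < n)%nat -> T i j <= 0).
  { intros i j Hi Hj. unfold T. destruct (Rle_dec (P i j) 0); [lra|].
    assert (Hle : P i j <= sumn (fun j => P i j) n) by (apply (sumn_term (fun j => P i j)); auto).
    assert (0 < sumn (fun j => P i j) n) by lra.
    assert (log2 (P i j / sumn (fun j => P i j) n) <= 0).
    { apply log2_nonpos. apply Rdiv_lt_0_compat; lra.
      apply (Rmult_le_reg_r (sumn (fun j => P i j) n)); auto. unfold Rdiv.
      rewrite Rmult_assoc, Rinv_l; lra. }
    assert (0 <= P i j) by lra. nra. }
  assert (Hi0 : forall i, (i < m)%nat -> sumn (fun j => T i j) n = 0).
  { apply sumn_zero_nonpos; [|lra]. intros. apply sumn_nonpos. auto. }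
  intros i j Hi Hj Hp.
  assert (E := sumn_zero_nonpos _ _ (fun j Hj => HT i j Hi Hj) (Hi0 i Hi) j Hj). unfold T in E.
  destruct (Rle_dec (P i j) 0); [lra|].
  assert (Hle : P i j <= sumn (fun j => P i j) n) by (apply (sumn_term (fun j => P i j)); auto).
  assert (0 < sumn (fun j => P i j) n) by lra.
  apply Rmult_integral in E as [E|E]; [lra|].
  apply log2_zero in E; [|apply Rdiv_lt_0_compat; lra].
  apply (Rmult_eq_compat_r (sumn (fun j => P i j) n)) in E. unfold Rdiv in E.
  rewrite Rmult_assoc, Rinv_l, Rmult_1_r in E; lra. Qed.

Lemma in_marg (f : nat -> R) k x : In x (map f (seq 0 k)) -> exists i, (i < k)%nat /\ x = f i.
Proof. intros H. apply in_map_iff in H as [i [<- Hi]]. apply in_seq in Hi. exists i; split; [lia|auto]. Qed.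

Theorem corollary2 (m n : nat) (P : nat -> nat -> R) :
  is_joint_pmf m n P ->
  cond_entropy m n P = 0 ->
  (forall k, (k < common_len m n)%nat ->
     0 < nth k (qvec m n P) 0 -> 0 < nth k (pvec m n P) 0) /\
  entropy (marg_X m n P) >=
    entropy (marg_Y m n P) + relent (qvec m n P) (pvec m n P).
Proof.
  intros [Hnn Hsum] Hce.
  assert (Hdet := determ m n P Hnn Hce).
  set (p := fun i => sumn (fun j => P i j) n).
  set (q := fun j => sumn (fun i => P i j) m).
  assert (EX : marg_X m n P = map p (seq 0 m)) by reflexivity.
  assert (EY : marg_Y m n P = map q (seq 0 n)) by reflexivity.
  change (sumn p m = 1) in Hsum.
  assert (HsumY : sumn q n = 1).
  { unfold q. rewrite <- sumn_swap. exact Hsum. }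
  assert (Hpnn : forall i, (i < m)%nat -> 0 <= p i).
  { intros. apply sumn_nonneg. intros; auto. }
  assert (Hqnn : forall j, (j < n)%nat -> 0 <= q j).
  { intros. apply sumn_nonneg. intros; auto. }
  set (Lx := sort_desc (marg_X m n P)).
  set (Qy := sort_desc (marg_Y m n P)).
  assert (HLin : forall x, In x Lx -> 0 <= x).
  { intros x Hx. apply (Permutation_in _ (sort_perm _)) in Hx. rewrite EX in Hx.
    apply in_marg in Hx as [i [Hi ->]]. auto. }
  assert (HQin : forall x, In x Qy -> 0 <= x).
  { intros x Hx. apply (Permutation_in _ (sort_perm _)) in Hx. rewrite EY in Hx.
    apply in_marg in Hx as [i [Hi ->]]. auto. }
  set (L := fun k => nth k Lx 0).
  set (Q := fun k => nth k Qy 0).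
  assert (HL0 : forall k, 0 <= L k) by (intros; apply nth_nonneg; auto).
  assert (HQ0 : forall k, 0 <= Q k) by (intros; apply nth_nonneg; auto).
  assert (HLd : forall i j, (i <= j)%nat -> L j <= L i) by (apply desc_nth; auto; apply sort_sorted).
  assert (HQd : forall i j, (i <= j)%nat -> Q j <= Q i) by (apply desc_nth; auto; apply sort_sorted).
  assert (HlenL : length Lx = m) by (unfold Lx; rewrite length_sort, EX, length_map, length_seq; auto).
  assert (HlenQ : length Qy = n) by (unfold Qy; rewrite length_sort, EY, length_map, length_seq; auto).
  assert (HLz : forall k, (m <= k)%nat -> L k = 0) by (intros; unfold L; apply nth_overflow; lia).
  assert (HQz : forall k, (n <= k)%nat -> Q k = 0) by (intros; unfold Q; apply nth_overflow; lia).
  assert (TX : forall g : R -> R, sumR (map g (marg_X m n P)) = sumn (fun k => g (L k)) m).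
  { intros g. rewrite (sumR_perm _ (map g Lx)) by (apply Permutation_map, Permutation_sym, sort_perm).
    rewrite (sumR_idx 0), HlenL. reflexivity. }
  assert (TY : forall g : R -> R, sumR (map g (marg_Y m n P)) = sumn (fun k => g (Q k)) n).
  { intros g. rewrite (sumR_perm _ (map g Qy)) by (apply Permutation_map, Permutation_sym, sort_perm).
    rewrite (sumR_idx 0), HlenQ. reflexivity. }
  assert (HL1 : sumn L m = 1).
  { rewrite <- Hsum. assert (H := TX (fun x => x)). rewrite map_id in H.
    rewrite EX in H. unfold sumn at 2. rewrite H. reflexivity. }
  assert (HQ1 : sumn Q n = 1).
  { rewrite <- HsumY. assert (H := TY (fun x => x)). rewrite map_id in H.
    rewrite EY in H. unfold sumn at 2. rewrite H. reflexivity. }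
  assert (Hhinge : forall c, 0 <= c -> sumn (fun k => hinge c (L k)) m <= sumn (fun k => hinge c (Q k)) n).
  { intros c Hc. rewrite <- (TX (hinge c)), <- (TY (hinge c)), EX, EY, !map_map.
    change (sumn (fun i => hinge c (p i)) m <= sumn (fun j => hinge c (q j)) n).
    apply Rle_trans with (sumn (fun i => sumn (fun j => hinge c (P i j)) n) m).
    - apply sumn_le. intros i Hi. unfold hinge at 1.
      destruct (Rle_dec (p i) c).
      + rewrite Rmax_left by lra. apply sumn_nonneg. intros; apply hinge_nonneg.
      + destruct (classic (exists j, (j < n)%nat /\ 0 < P i j)) as [[j [Hj Hp]]|Hno].
        * apply Rle_trans with (hinge c (P i j)).
          -- rewrite (Hdet i j Hi Hj Hp). apply Req_le. unfold hinge, p. reflexivity.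
          -- apply (sumn_term (fun j => hinge c (P i j))); auto. intros; apply hinge_nonneg.
        * exfalso. assert (p i <= 0).
          { apply sumn_nonpos. intros j Hj. destruct (Rle_dec (P i j) 0); auto.
            exfalso; apply Hno; exists j; split; auto; lra. }
          assert (0 <= p i) by auto. lra.
    - rewrite sumn_swap. apply sumn_le. intros j Hj. unfold q. apply sumn_hinge; auto. }
  assert (Maj : forall t, sumn L t <= sumn Q t).
  { intros [|t]; [rewrite !sumn_0; lra|].
    set (c := Q t). assert (Hc : 0 <= c) by apply HQ0.
    assert (H1 : sumn L (S t) <= INR (S t) * c + sumn (fun k => hinge c (L k)) m).
    { apply Rle_trans with (sumn (fun k => c + hinge c (L k)) (S t)).
      - apply sumn_le; intros; apply hinge_ge.
      - rewrite sumn_plus, sumn_const. apply Rplus_le_compat_l. apply sumn_le_tail.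
        + intros k Hk. rewrite HLz by auto. apply hinge_0; auto.
        + intros; apply hinge_nonneg. }
    assert (H2 : sumn (fun k => hinge c (Q k)) n = sumn Q (S t) - INR (S t) * c).
    { rewrite (sumn_tail2 _ n (S t)).
      - rewrite <- sumn_const, <- sumn_minus. apply sumn_ext. intros k Hk.
        unfold hinge. apply Rmax_right. assert (Q t <= Q k) by (apply HQd; lia). unfold c; lra.
      - intros k Hk. rewrite HQz by auto. apply hinge_0; auto.
      - intros k Hk. unfold hinge. apply Rmax_left. assert (Q k <= Q t) by (apply HQd; lia). unfold c; lra. }
    assert (H3 := Hhinge c Hc). lra. }
  assert (Supp : forall k, 0 < Q k -> 0 < L k).
  { intros k Hk. destruct (Rle_dec (L k) 0) as [HLk|]; [|lra]. exfalso.
    assert (Hz : forall k', (k <= k')%nat -> L k' = 0).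
    { intros k' Hk'. assert (L k' <= L k) by auto. assert (0 <= L k') by auto. lra. }
    assert (sumn L k = 1) by (rewrite <- HL1; apply sumn_tail2; auto).
    assert (sumn Q (S k) <= 1) by (rewrite <- HQ1; apply sumn_le_tail; auto).
    rewrite sumn_S in H0. assert (H1 := Maj k). lra. }
  split.
  { intros k _ Hk. unfold qvec, pvec in *. rewrite nth_pad in *. apply Supp. exact Hk. }
  set (N := common_len m n).
  assert (HmN : (m <= N)%nat) by (unfold N, common_len; lia).
  assert (HnN : (n <= N)%nat) by (unfold N, common_len; lia).
  assert (plogp0 : plogp 0 = 0) by (unfold plogp; destruct (Rle_dec 0 0); lra).
  assert (EHX : entropy (marg_X m n P) = - sumn (fun k => plogp (L k)) N).
  { unfold entropy. rewrite TX. f_equal. symmetry. apply sumn_tail; auto.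
    intros; rewrite HLz; auto. }
  assert (EHY : entropy (marg_Y m n P) = - sumn (fun k => plogp (Q k)) N).
  { unfold entropy. rewrite TY. f_equal. symmetry. apply sumn_tail; auto.
    intros; rewrite HQz; auto. }
  set (W := fun k => if Rle_dec (Q k) 0 then 0 else Q k * log2 (L k)).
  assert (ERel : relent (qvec m n P) (pvec m n P) = sumn (fun k => plogp (Q k)) N - sumn W N).
  { unfold relent. rewrite (sumR_idx (0,0)).
    assert (Hl1 : length (qvec m n P) = N) by (apply length_pad; rewrite length_sort, EY, length_map, length_seq; auto).
    assert (Hl2 : length (pvec m n P) = N) by (apply length_pad; rewrite length_sort, EX, length_map, length_seq; auto).
    rewrite length_combine, Hl1, Hl2, Nat.min_id, <- sumn_minus. apply sumn_ext. intros k Hk.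
    rewrite combine_nth by congruence. unfold qvec, pvec. rewrite !nth_pad.
    fold Qy Lx. fold (Q k) (L k). unfold W, plogp.
    destruct (Rle_dec (Q k) 0); [lra|].
    assert (0 < L k) by (apply Supp; lra). rewrite log2_div by lra. ring. }
  set (e := minpos Lx).
  assert (He : 0 < e) by apply minpos_pos.
  set (a := fun k => log2 (Rmax (L k) e)).
  assert (Hab := abel N (fun k => Q k - L k) a).
  assert (HLN : sumn L N = 1) by (rewrite <- HL1; apply sumn_tail; auto).
  assert (HQN : sumn Q N = 1) by (rewrite <- HQ1; apply sumn_tail; auto).
  assert (Hab' : 0 <= sumn (fun k => (Q k - L k) * a k) N).
  { apply Hab.
    - intros k k' Hkk' _. unfold a. apply log2_le.
      + apply Rlt_le_trans with e; auto; apply Rmax_r.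
      + apply Rle_max_compat_r. auto.
    - intros t _. rewrite sumn_minus. assert (H := Maj t). lra.
    - rewrite sumn_minus. lra. }
  assert (E1 : sumn (fun k => L k * a k) N = sumn (fun k => plogp (L k)) N).
  { apply sumn_ext. intros k _. unfold plogp, a. destruct (Rle_dec (L k) 0).
    - assert (L k = 0) by (assert (H := HL0 k); lra). rewrite H. ring.
    - assert (e <= L k).
      { apply minpos_le; [|lra]. unfold L. apply nth_In. destruct (Nat.lt_ge_cases k (length Lx)); auto.
        exfalso. unfold L in n0. rewrite nth_overflow in n0 by auto. lra. }
      rewrite Rmax_left by lra. reflexivity. }
  assert (E2 : sumn (fun k => Q k * a k) N = sumn W N).
  { apply sumn_ext. intros k _. unfold W, a. destruct (Rle_dec (Q k) 0).
    - assert (Q k = 0) by (assert (H := HQ0 k); lra). rewrite H. ring.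
    - assert (HLk : 0 < L k) by (apply Supp; lra).
      assert (e <= L k).
      { apply minpos_le; [|lra]. unfold L. apply nth_In. destruct (Nat.lt_ge_cases k (length Lx)); auto.
        exfalso. unfold L in HLk. rewrite nth_overflow in HLk by auto. lra. }
      rewrite Rmax_left by lra. reflexivity. }
  assert (E3 : sumn (fun k => (Q k - L k) * a k) N = sumn (fun k => Q k * a k) N - sumn (fun k => L k * a k) N).
  { rewrite <- sumn_minus. apply sumn_ext; intros; ring. }
  rewrite EHX, EHY, ERel. lra.
Qed.
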